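(* Let $X$ be a geodesic space with $r(X)>0$, let $\varepsilon>0$, $0<q\le r(X)/2$, and let $A\subset X$ with $\operatorname{Diam}(A)\le q-2\varepsilon$. Then there exists an open geodesically convex subset $A_\infty\subset X$ containing $A$ with $\operatorname{Diam}(A_\infty)\le q-\varepsilon$.
   Context: A metric space is geodesic if any two points $x,y$ are joined by a path of length $d(x,y)$ (a geodesic; here a geodesic is the image of an isometric embedding of a closed interval). For a geodesic space $X$, $r(X)\ge0$ is the supremum of the real numbers $r$ satisfying: (1) for all $x,y\in X$ with $d(x,y)<2r$ there is a unique shortest geodesic from $x$ to $y$; (2) if $x,y,u\in X$ with $d(x,y)<r$, $d(u,x)<r$, $d(u,y)<r$ and $z$ is a point on the geodesic joining $x$ and $y$, then $d(u,z)\le\max\{d(u,x),d(u,y)\}$; (3) if $\gamma,\gamma'$ are arc-length parameterized geodesics with $\gamma(0)=\gamma'(0)$ and $0\le s,s'<r$, $0\le t<1$, then $d(\gamma(ts),\gamma'(ts'))\le d(\gamma(s),\gamma'(s'))$. A subset $A$ of a ball $B(x_0,r(X))$ is geodesically convex if every (unique shortest) geodesic connecting two points of $A$ lies entirely in $A$. *)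

(* Defs.v *)
From Stdlib Require Export Reals.
Open Scope R_scope.

Definition is_metric {X : Type} (d : X -> X -> R) : Prop :=
  (forall x y, 0 <= d x y) /\
  (forall x y, d x y = 0 <-> x = y) /\
  (forall x y, d x y = d y x) /\
  (forall x y z, d x z <= d x y + d y z).

Definition is_geodesic {X : Type} (d : X -> X -> R) (x y : X) (G : X -> Prop) : Prop :=
  exists g : R -> X,
    g 0 = x /\ g (d x y) = y /\
    (forall s t, 0 <= s <= d x y -> 0 <= t <= d x y -> d (g s) (g t) = Rabs (s - t)) /\
    (forall z, G z <-> exists t, 0 <= t <= d x y /\ g t = z).

Definition geodesic_space {X : Type} (d : X -> X -> R) : Prop :=
  is_metric d /\ forall x y : X, exists G, is_geodesic d x y G.

Definition arclength_geodesic {X : Type} (d : X -> X -> R) (g : R -> X) (L : R) : Prop :=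
  0 <= L /\
  forall s t, 0 <= s <= L -> 0 <= t <= L -> d (g s) (g t) = Rabs (s - t).

Definition rX_conditions {X : Type} (d : X -> X -> R) (r : R) : Prop :=
  (forall x y, d x y < 2 * r ->
     exists G, is_geodesic d x y G /\
       forall G', is_geodesic d x y G' -> forall z, G' z <-> G z) /\
  (forall x y u G z, d x y < r -> d u x < r -> d u y < r ->
     is_geodesic d x y G -> G z -> d u z <= Rmax (d u x) (d u y)) /\
  (forall (g g' : R -> X) L L' s s' t,
     arclength_geodesic d g L -> arclength_geodesic d g' L' -> g 0 = g' 0 ->
     0 <= s < r -> s <= L -> 0 <= s' < r -> s' <= L' -> 0 <= t < 1 ->
     d (g (t * s)) (g' (t * s')) <= d (g s) (g' s')).

(* The set whose supremum is r(X). *)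
Definition rX_set {X : Type} (d : X -> X -> R) (r : R) : Prop :=
  0 <= r /\ rX_conditions d r.

Definition rX_pos {X : Type} (d : X -> X -> R) : Prop :=
  exists r, 0 < r /\ rX_set d r.

(* c <= r(X), with r(X) = sup rX_set in the extended reals
   (if rX_set is unbounded, r(X) = +infinity and this holds). *)
Definition rX_ge {X : Type} (d : X -> X -> R) (c : R) : Prop :=
  forall l, is_lub (rX_set d) l -> c <= l.

Definition diam_le {X : Type} (d : X -> X -> R) (A : X -> Prop) (c : R) : Prop :=
  forall x y, A x -> A y -> d x y <= c.

Definition is_open {X : Type} (d : X -> X -> R) (A : X -> Prop) : Prop :=
  forall x, A x -> exists e, 0 < e /\ forall y, d x y < e -> A y.

Definition geodesically_convex {X : Type} (d : X -> X -> R) (A : X -> Prop) : Prop :=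
  forall x y G, A x -> A y -> is_geodesic d x y G -> forall z, G z -> A z.

(* Main.v *)
Require Import Defs.
From Stdlib Require Import Reals Lra Lia Classical.
Open Scope R_scope.

Definition Jh {X : Type} (d : X -> X -> R) (S : X -> Prop) (z : X) : Prop :=
  exists x y G, S x /\ S y /\ is_geodesic d x y G /\ G z.

Fixpoint seqA {X : Type} (d : X -> X -> R) (A : X -> Prop) (eps : R) (n : nat)
  : X -> Prop :=
  match n with
  | O => A
  | S m => fun x => exists y, Jh d (seqA d A eps m) y /\ d x y < eps * (/2) ^ (m + 3)
  end.

Lemma geo_start {X : Type} (d : X -> X -> R) x y G :
  is_metric d -> is_geodesic d x y G -> G x.
Proof.
  intros [hm _] [g [h0 [h1 [h2 h3]]]]. apply h3. exists 0.
  split; [|exact h0]. specialize (hm x y). lra.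
Qed.

Lemma J_incl {X : Type} (d : X -> X -> R) (S : X -> Prop) x :
  geodesic_space d -> S x -> Jh d S x.
Proof.
  intros [hm hg] Hx. destruct (hg x x) as [G HG].
  exists x, x, G. repeat split; auto. eapply geo_start; eauto.
Qed.

Lemma J_diam {X : Type} (d : X -> X -> R) (S : X -> Prop) D r :
  is_metric d -> rX_conditions d r -> D < r -> diam_le d S D -> diam_le d (Jh d S) D.
Proof.
  intros hm [_ [c2 _]] hDr hS z z' [x [y [G [Sx [Sy [HG Gz]]]]]]
    [x' [y' [G' [Sx' [Sy' [HG' Gz']]]]]].
  destruct hm as [_ [_ [sym _]]].
  assert (Hb : forall u, S u -> d u z <= D).
  { intros u Su. eapply Rle_trans.
    apply (c2 x y u G z); auto.
    - pose proof (hS x y Sx Sy); lra.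
    - pose proof (hS u x Su Sx); lra.
    - pose proof (hS u y Su Sy); lra.
    - apply Rmax_lub; auto. }
  eapply Rle_trans.
  apply (c2 x' y' z G' z'); auto.
  - pose proof (hS x' y' Sx' Sy'); lra.
  - rewrite sym. pose proof (Hb x' Sx'); lra.
  - rewrite sym. pose proof (Hb y' Sy'); lra.
  - apply Rmax_lub; rewrite sym; auto.
Qed.

Theorem mainTheorem4 (X : Type) (d : X -> X -> R) (hX : geodesic_space d)
  (hr : rX_pos d) (eps q : R) (heps : 0 < eps) (hq0 : 0 < q)
  (hq : rX_ge d (2 * q)) (A : X -> Prop) (hA : diam_le d A (q - 2 * eps)) :
  exists Ainf : X -> Prop,
    is_open d Ainf /\ geodesically_convex d Ainf /\
    (forall x, A x -> Ainf x) /\ diam_le d Ainf (q - eps).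
Proof.
  assert (hm : is_metric d) by (destruct hX; auto).
  assert (Hr : exists r, q < r /\ rX_set d r).
  { destruct (classic (exists r, q < r /\ rX_set d r)) as [H|H]; auto.
    exfalso. assert (ub : is_upper_bound (rX_set d) q).
    { intros r Hr. destruct (Rle_dec r q); auto. exfalso; apply H; exists r; split; auto; lra. }
    destruct hr as [r0 [_ Hr0]].
    destruct (completeness (rX_set d)) as [l Hl].
    - exists q; exact ub.
    - exists r0; exact Hr0.
    - pose proof (hq l Hl). destruct Hl as [_ Hl]. pose proof (Hl q ub). lra. }
  destruct Hr as [r [Hqr [_ Hrc]]].
  destruct hm as [hpos [hzero [hsym htri]]] eqn:Ehm.
  set (dl := fun n : nat => eps * (/2) ^ n).
  assert (dlpos : forall n, 0 < dl n).
  { intro n. unfold dl. apply Rmult_lt_0_compat; auto. apply pow_lt; lra. }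
  assert (dlS : forall n, dl (S n) = dl n / 2).
  { intro n. unfold dl. simpl. field. }
  assert (mono1 : forall n x, seqA d A eps n x -> seqA d A eps (S n) x).
  { intros n x Hx. simpl. exists x. split.
    - apply J_incl; auto.
    - rewrite (proj2 (hzero x x) eq_refl). apply (dlpos (n+3)%nat). }
  assert (mono : forall n m x, (n <= m)%nat -> seqA d A eps n x -> seqA d A eps m x).
  { intros n m x Hnm. induction Hnm; auto. }
  assert (diamn : forall n, diam_le d (seqA d A eps n) (q - eps - dl (n+1)%nat)).
  { induction n as [|n IH].
    - intros x y Hx Hy. pose proof (hA x y Hx Hy). unfold dl. simpl. lra.
    - assert (HJ : diam_le d (Jh d (seqA d A eps n)) (q - eps - dl (n+1)%nat)).
      { apply J_diam with r; auto. pose proof (dlpos (n+1)%nat); lra. }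
      intros x x' [y [Jy Hy]] [y' [Jy' Hy']].
      pose proof (HJ y y' Jy Jy').
      pose proof (htri x y x'). pose proof (htri y y' x').
      rewrite (hsym x' y') in Hy'.
      replace (S n + 1)%nat with (S (n + 1)) by lia.
      replace (n + 3)%nat with (S (S (n + 1))) in Hy, Hy' by lia.
      
      change (eps * (/2) ^ (S (S (n+1)))) with (dl (S (S (n+1)))) in Hy, Hy'. rewrite !dlS in Hy, Hy' |- *.
      rewrite ?dlS in *. lra. }
  exists (fun x => exists n, seqA d A eps (S n) x).
  split; [|split; [|split]].
  - intros x [n [y [Jy Hy]]].
    exists (eps * (/2) ^ (n + 3) - d x y). split; [lra|].
    intros z Hz. exists n. exists y. split; auto.
    pose proof (htri z x y). rewrite (hsym z x) in H. lra.
  - intros x y G [n Hx] [m Hy] HG z Gz.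
    exists (S (max n m)). cbn [seqA]. exists z. split.
    + exists x, y, G. repeat split; auto.
      * apply (mono (S n) (S (max n m))); auto; lia.
      * apply (mono (S m) (S (max n m))); auto; lia.
    + rewrite (proj2 (hzero z z) eq_refl). apply (dlpos (_ + 3)%nat).
  - intros x Hx. exists O. apply mono1. exact Hx.
  - intros x y [n Hx] [m Hy].
    pose proof (diamn (S (max n m)) x y).
    pose proof (dlpos (S (max n m) + 1)%nat).
    assert (d x y <= q - eps - dl (S (max n m) + 1)%nat); [|lra].
    apply H.
    + apply (mono (S n)); auto; lia.
    + apply (mono (S m)); auto; lia.
Qed.
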